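(* Let $G$ be a connected graph, $X$ a minimum vertex cover of $G$, and $\ell,d$ integers. Suppose some vertex $x^\circ\in X$ is adjacent to a pendant vertex (a vertex of degree $1$). Suppose there are subsets $X_s\subseteq X$ and $Y_s\subseteq V(G)\setminus X$ such that (i) $(X\setminus X_s)\cup Y_s$ is a vertex cover of $G$, (ii) $\mathrm{rank}((X\setminus X_s)\cup Y_s)\ge \ell$, and (iii) $|Y_s|-|X_s|\le \ell-d$. Then there are subsets $X'_s\subseteq X$ and $Y'_s\subseteq V(G)\setminus X$ satisfying (i), (ii), (iii) (with $X_s,Y_s$ replaced by $X'_s,Y'_s$) and additionally $x^\circ\notin X'_s$.
   Context: All graphs are finite, simple and undirected. $\mathrm{rank}(H)$ is $|V(H)|$ minus the number of connected components of $H$, and for $S\subseteq V(G)$, $\mathrm{rank}(S):=\mathrm{rank}(G[S])$. *)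

(* Defs.v *)
From mathcomp Require Import all_boot all_order all_algebra.
Set Implicit Arguments. Unset Strict Implicit. Unset Printing Implicit Defensive.

Definition simple_graph (T : finType) (e : rel T) : Prop :=
  symmetric e /\ irreflexive e.

Definition connected_graph (T : finType) (e : rel T) : Prop :=
  forall x y : T, connect e x y.

Definition vertex_cover (T : finType) (e : rel T) (S : {set T}) : Prop :=
  forall x y : T, e x y -> (x \in S) || (y \in S).

Definition min_vertex_cover (T : finType) (e : rel T) (X : {set T}) : Prop :=
  vertex_cover e X /\ forall S : {set T}, vertex_cover e S -> #|X| <= #|S|.

Definition degree (T : finType) (e : rel T) (x : T) : nat := #|[set y | e x y]|.

Definition induced (T : finType) (e : rel T) (S : {set T}) : rel T :=
  fun x y => [&& x \in S, y \in S & e x y].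

Definition n_components (T : finType) (e : rel T) (S : {set T}) : nat :=
  n_comp (induced e S) (mem S).

Definition rank_set (T : finType) (e : rel T) (S : {set T}) : int :=
  (#|S|%:Z - (n_components e S)%:Z)%R.

(* Main.v *)
Require Import Defs.
From mathcomp Require Import all_boot all_order all_algebra.
From mathcomp Require Import zify.
Import Order.TTheory GRing.Theory Num.Theory.
Set Implicit Arguments. Unset Strict Implicit. Unset Printing Implicit Defensive.

Lemma ncomp_le (T:finType) (ea eb : rel T) (A B : {set T}) (f g : T -> T):
 connect_sym ea -> connect_sym eb -> closed ea A ->
 (forall x y, ea x y -> connect eb (f x) (f y)) ->
 (forall r, r \in B -> g r \in A /\ f (g r) = r) ->
 n_comp eb B <= n_comp ea A.
Proof.
move=> sa sb cA hf hg.
have hc : forall x y, connect ea x y -> connect eb (f x) (f y).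
  move=> x _ /connectP[p ep ->]; elim: p x ep => //= y p IH x /andP[/hf h1 /IH].
  exact: connect_trans.
rewrite /n_comp_mem.
set RB := [set r | (roots eb r) && (r \in B)].
set RA := [set r | (roots ea r) && (r \in A)].
have -> : #|predI (roots eb) (mem B)| = #|RB| by apply: eq_card => r; rewrite !inE.
have -> : #|predI (roots ea) (mem A)| = #|RA| by apply: eq_card => r; rewrite !inE.
rewrite -(@card_in_imset _ _ (fun r => fingraph.root ea (g r)) RB).
  apply: subset_leq_card; apply/subsetP => z /imsetP[r rR ->].
  move: rR; rewrite !inE => /andP[_ rB]; have [gA _] := hg r rB.
  rewrite roots_root //=.
  by rewrite -(closed_connect cA (connect_root ea (g r))).
move=> r1 r2; rewrite !inE => /andP[/eqP h1 b1] /andP[/eqP h2 b2] /eqP.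
rewrite root_connect // => /hc.
have [_ ->] := hg r1 b1; have [_ ->] := hg r2 b2.
by move/(fingraph.rootP sb); rewrite h1 h2.
Qed.

Local Open Scope ring_scope.

Theorem lemma2 (T : finType) (e : rel T) (X : {set T}) (l d : int) (x0 : T) :
  simple_graph e -> connected_graph e -> min_vertex_cover e X ->
  x0 \in X -> (exists p : T, e x0 p /\ degree e p = 1%N) ->
  (exists (Xs Ys : {set T}),
      [/\ Xs \subset X, Ys \subset ~: X,
          vertex_cover e ((X :\: Xs) :|: Ys),
          l <= rank_set e ((X :\: Xs) :|: Ys)
        & #|Ys|%:Z - #|Xs|%:Z <= l - d]) ->
  exists (Xs' Ys' : {set T}),
      [/\ Xs' \subset X, Ys' \subset ~: X,
          vertex_cover e ((X :\: Xs') :|: Ys'),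
          l <= rank_set e ((X :\: Xs') :|: Ys')
        & #|Ys'|%:Z - #|Xs'|%:Z <= l - d] /\ x0 \notin Xs'.
Proof.
move=> [sym irr] _ [covX minX] x0X [p [ex0p degp]] [Xs [Ys [hXs hYs covS rkS cdS]]].
case: (boolP (x0 \in Xs)) => hx; last by exists Xs, Ys.
have pend : forall y, e p y -> y = x0.
  move: degp; rewrite /degree => /eqP/cards1P[z hz] y epy.
  have : x0 \in [set y | e p y] by rewrite inE sym.
  have : y \in [set y | e p y] by rewrite inE.
  by rewrite hz !inE => /eqP -> /eqP ->.
have px0 : p != x0 by apply/eqP => h; move: ex0p; rewrite h irr.
have pX : p \notin X.
  apply/negP => pX.
  have cov' : vertex_cover e (X :\ p).
    move=> x y exy; rewrite !inE.
    case: (x =P p) => [hxp|nxp] /=.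
      subst x; rewrite (pend _ exy) x0X; by rewrite eq_sym px0.
    case: (y =P p) => [hyp|nyp] /=.
      subst y; rewrite sym in exy; by rewrite (pend _ exy) x0X.
    by move: (covX x y exy).
  move: (minX _ cov'); rewrite (cardsD1 p X) pX.
  by rewrite add1n ltnn.
set S := (X :\: Xs) :|: Ys.
have x0S : x0 \notin S.
  rewrite !inE hx /=; apply/negP => /(subsetP hYs); by rewrite inE x0X.
have pS : p \in S.
  by move: (covS _ _ ex0p); rewrite -/S (negbTE x0S).
have pYs : p \in Ys by move: pS; rewrite !inE (negbTE pX) andbF.
set S' := (X :\: (Xs :\ x0)) :|: (Ys :\ p).
have memS' : forall z, (z \in S') = (z == x0) || ((z != p) && (z \in S)).
  move=> z; rewrite !inE.
  case: (z =P x0) => [->|nz] /=; first by rewrite x0X.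
  case: (z =P p) => [->|np] //=.
  by rewrite (negbTE pX) andbF.
have Xs'X : Xs :\ x0 \subset X.
  by apply/subsetP => z; rewrite !inE => /andP[_ /(subsetP hXs)].
have Ys'X : Ys :\ p \subset ~: X.
  by apply/subsetP => z; rewrite !inE => /andP[_ /(subsetP hYs)]; rewrite inE.
exists (Xs :\ x0), (Ys :\ p); split; last by rewrite !inE eqxx.
split => //.
- move=> x y exy; rewrite -/S' !memS'.
  case: (x =P p) => [hxp|nxp] /=.
    by subst x; rewrite (pend _ exy) eqxx orbT.
  case: (y =P p) => [hyp|nyp] /=.
    by subst y; rewrite sym in exy; rewrite (pend _ exy) eqxx.
  move: (covS x y exy); rewrite -/S.
  by case: (x \in S); case: (y \in S); rewrite ?orbT.
- have cardS' : #|S'| = #|S|.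
    have -> : S' = x0 |: (S :\ p).
      by apply/setP => z; rewrite memS' !inE.
    have h : x0 \notin S :\ p by rewrite in_setD1 (negbTE x0S) andbF.
    by rewrite cardsU1 h (cardsD1 p S) pS.
  have symi : forall A : {set T}, connect_sym (induced e A).
    move=> A; apply: sym_connect_sym => x y; rewrite /induced (sym x y).
    by case: (x \in A); case: (y \in A).
  have ncle : (n_components e S' <= n_components e S)%N.
    apply: (@ncomp_le _ _ _ _ _ (fun z => if z == p then x0 else z)
                                (fun z => if z == x0 then p else z)) => //.
    + by move=> x y /and3P[-> -> _].
    + move=> x y /and3P[xS yS exy].
      have nxp : x != p.
        by apply/eqP => hxp; subst x; move: yS; rewrite (pend _ exy) (negbTE x0S).
      have nyp : y != p.
        apply/eqP => hyp; subst y; rewrite sym in exy.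
        by move: xS; rewrite (pend _ exy) (negbTE x0S).
      rewrite (negbTE nxp) (negbTE nyp); apply: connect1.
      by rewrite /induced !memS' nxp nyp xS yS exy !orbT.
    + move=> r; rewrite memS'.
      case: (r =P x0) => [->|nr] /=; first by move=> _; rewrite eqxx pS; split => //; case: ifP.
      by move=> /andP[np rS]; rewrite (negbTE np).
  move: rkS; rewrite /rank_set -/S -/S' cardS'.
  move: ncle; set a := n_components e S'; set b := n_components e S.
  move=> h1 h2; lia.
- rewrite (cardsD1 p Ys) (cardsD1 x0 Xs) pYs hx in cdS.
  move: cdS; rewrite !add1n. lia.
Qed.
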